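(* Let $G$ be an edge-coloured digraph. Then, in the Hopf algebra $\mathrm{QSym}(x)$, $$\Delta(\mathscr{X}_G(x))=\sum_{F}\mathscr{X}_{G|_{V(G)-V(F)}}(x)\otimes\mathscr{X}_F(x),$$ where the sum runs over all $\{\rightarrow,\Rightarrow\}$-induced subdigraphs $F$ of $G$.
   Context: An edge-coloured digraph is a finite simple digraph $G$ (no loops; for distinct vertices $a,b$ at most one edge from $a$ to $b$) in which every edge is assigned one of three types: dashed ($a\dashrightarrow b$), solid ($a\rightarrow b$) or double ($a\Rightarrow b$). A proper vertex-colouring is $\kappa:V(G)\to\mathbb{P}$ with $\kappa(a)\ne\kappa(b)$ for dashed edges $(a,b)$, $\kappa(a)<\kappa(b)$ for solid edges, $\kappa(a)\le\kappa(b)$ for double edges. The generalized chromatic function is $\mathscr{X}_G(x)=\sum_{\kappa}\prod_{a\in V(G)}x_{\kappa(a)}$, summed over proper vertex-colourings, in commuting variables $x_1,x_2,\dots$ (for the empty digraph it equals $1$). For $A\subseteq V(G)$, $G|_A$ is the induced subdigraph on $A$ (all edges of $G$ with both ends in $A$, with their types). An induced subdigraph $F$ of $G$ (possibly empty or all of $G$) is $\{\rightarrow,\Rightarrow\}$-induced if whenever $a\in V(F)$ and $a\rightarrow b$ or $a\Rightarrow b$ is an edge of $G$, then $b\in V(F)$. $\mathrm{QSym}(x)$ is the algebra of bounded-degree formal power series $f$ such that for every composition $(\alpha_1,\dots,\alpha_k)$ all monomials $x_{i_1}^{\alpha_1}\cdots x_{i_k}^{\alpha_k}$ with $i_1<\dots<i_k$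 have the same coefficient; its coproduct $\Delta$ is obtained by substituting the ordered alphabet $x_1<x_2<\cdots<y_1<y_2<\cdots$ into $f$, writing the result as an element $\sum f_1(x)g_1(y)$ of $\mathrm{QSym}(x)\otimes\mathrm{QSym}(y)$, and identifying $y$ with $x$ to get $\sum f_1\otimes g_1$. *)

(* Defs.v *)
From mathcomp Require Import all_boot.
Set Implicit Arguments. Unset Strict Implicit. Unset Printing Implicit Defensive.

(* Edge types: dashed (a -->> b), solid (a -> b), double (a => b). *)
Inductive etype := Dashed | Solid | Double.

Record ecdigraph (V : finType) := ECDigraph {
  edge : V -> V -> option etype;
  edge_noloop : forall a, edge a a = None }.

(* Proper vertex colouring.  Colours are natural numbers 0,1,2,... standing
   for the positive integers 1,2,3,... (order-preserving shift). *)
Definition proper (V : finType) (G : ecdigraph V) (k : V -> nat) : bool :=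
  [forall a, forall b, match edge G a b with
              | Some Dashed => k a != k b
              | Some Solid => k a < k b
              | Some Double => k a <= k b
              | None => true
              end].

(* Formal power series in commuting variables x_0, x_1, ... with nat
   coefficients, given by their coefficient function on monomials.  A monomial
   is a sequence m of exponents: x_0^(m`_0) x_1^(m`_1) ... (trailing zeros are
   irrelevant). *)
Definition series := seq nat -> nat.

(* Coefficient of the monomial m in the generalized chromatic function:
   the number of proper colourings k with #{a | k a = i} = m`_i for all i.
   Every such colouring takes values < size m, so we may enumerate colourings
   into 'I_(size m). *)
Definition chrom (V : finType) (G : ecdigraph V) : series :=
  fun m => #|[set k : {ffun V -> 'I_(size m)} |
               proper G (fun a => nat_of_ord (k a)) &&
               [forall i : 'I_(size m), #|[set a | k a == i]| == nth 0 m i]]|.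

(* QSym: bounded degree, and the coefficient of x_{i1}^{a1} ... x_{ik}^{ak}
   (i1 < ... < ik, all aj > 0) depends only on the composition (a1,...,ak),
   i.e. on the sequence of nonzero exponents in order. *)
Definition compress (m : seq nat) : seq nat := [seq e <- m | 0 < e].

Definition is_qsym (f : series) : Prop :=
  (exists d, forall m, f m <> 0 -> sumn m <= d) /\
  (forall m1 m2, compress m1 = compress m2 -> f m1 = f m2).

(* Coproduct of a quasisymmetric f, as a series in two alphabets
   x_0 < x_1 < ... < y_0 < y_1 < ... : coefficient of x^mx y^my in
   f(x_0, x_1, ..., y_0, y_1, ...).  (QSym(x) (x) QSym(y) is identified with
   its image in the power series in x and y.) *)
Definition Delta (f : series) : seq nat -> seq nat -> nat :=
  fun mx my => f (compress (mx ++ my)).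

Definition induced (V : finType) (G : ecdigraph V) (A : {set V}) :
  ecdigraph {x : V | x \in A} :=
  @ECDigraph _ (fun a b => edge G (val a) (val b))
               (fun a => edge_noloop G (val a)).

(* A is the vertex set of a {->,=>}-induced subdigraph. *)
Definition arrow_closed (V : finType) (G : ecdigraph V) (A : {set V}) : bool :=
  [forall a, forall b, (a \in A) &&
    (match edge G a b with Some Solid | Some Double => true | _ => false end)
    ==> (b \in A)].

(* Main.v *)
Require Import Defs.
From mathcomp Require Import all_boot zify.
Set Implicit Arguments. Unset Strict Implicit. Unset Printing Implicit Defensive.

Lemma proper_ext (V : finType) (G : ecdigraph V) (k1 k2 : V -> nat) :
  (forall a b, (k1 a < k1 b) = (k2 a < k2 b)) ->
  Defs.proper G k1 = Defs.proper G k2.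
Proof.
move=> H.
have Hle a b : (k1 a <= k1 b) = (k2 a <= k2 b) by rewrite (leqNgt (k1 a)) (leqNgt (k2 a)) H.
have Heq a b : (k1 a == k1 b) = (k2 a == k2 b) by rewrite (eqn_leq (k1 a)) (eqn_leq (k2 a)) !Hle.
apply: eq_forallb => a; apply: eq_forallb => b.
by case: (edge G a b) => [[]|] //=; rewrite ?H ?Hle ?Heq.
Qed.

Lemma chrom_mono (V : finType) (G : ecdigraph V) (m m' : seq nat) (f : nat -> nat)
 (Hlt : forall i, i < size m -> f i < size m')
 (Hmono : forall i j, i < size m -> j < size m -> (f i < f j) = (i < j))
 (Hnth : forall i, i < size m -> nth 0 m' (f i) = nth 0 m i)
 (Hsurj : forall j, j < size m' -> 0 < nth 0 m' j -> exists2 i, i < size m & f i = j) :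
 chrom G m = chrom G m'.
Proof.
have Hinj i j : i < size m -> j < size m -> f i = f j -> i = j.
  move=> hi hj E; apply/eqP.
  have h1 := Hmono i j hi hj; have h2 := Hmono j i hj hi.
  by rewrite eqn_leq (leqNgt i) (leqNgt j) -h1 -h2 E ltnn.
pose F := fun k : {ffun V -> 'I_(size m)} =>
  [ffun a => Ordinal (Hlt _ (ltn_ord (k a)))] : {ffun V -> 'I_(size m')}.
have Finj : injective F.
  move=> k1 k2 E; apply/ffunP => a; apply: val_inj => /=; apply/eqP.
  have := congr1 (fun g : {ffun V -> _} => nat_of_ord (g a)) E; rewrite /F !ffunE /= => Ef.
  by rewrite (Hinj _ _ (ltn_ord _) (ltn_ord _) Ef).
rewrite /chrom -(card_imset _ Finj); apply: eq_card => k'.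
rewrite [in RHS]inE; apply/imsetP/idP.
- case=> k; rewrite inE => /andP [Hp /forallP Hc] ->.
  apply/andP; split.
    rewrite (@proper_ext _ _ _ (fun a => nat_of_ord (k a))) // => a b; rewrite /F !ffunE /=; exact: Hmono.
  apply/forallP => j.
  case: (boolP (0 < nth 0 m' j)) => [/(Hsurj _ (ltn_ord j)) [i Hi Hij] | ].
    have -> : [set a | F k a == j] = [set a | k a == Ordinal Hi].
      apply/setP => a; rewrite !inE /F ffunE; apply/eqP/eqP.
        move/(congr1 val) => /=; rewrite -Hij => Ha; apply/val_inj => /=.
        exact: Hinj Ha.
      by move=> ->; apply/val_inj.
    by rewrite (eqP (Hc _)) -Hij Hnth.
  rewrite -eqn0Ngt => /eqP Ej; rewrite Ej cards_eq0; apply/eqP/setP => a; rewrite !inE.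
  apply/negP => /eqP Ea.
  move: Ej; rewrite -Ea /F ffunE /= Hnth // -(eqP (Hc (k a))).
  by move/eqP; rewrite cards_eq0 => /eqP/setP/(_ a); rewrite !inE eqxx.
- move=> /andP [Hp /forallP Hc].
  have Hex a : exists2 i, i < size m & f i = k' a.
    apply: Hsurj (ltn_ord _) _; rewrite -(eqP (Hc (k' a))).
    by apply/card_gt0P; exists a; rewrite inE.
  pose g j := find (fun i => f i == j) (iota 0 (size m)).
  have Hhas a : has (fun i => f i == k' a) (iota 0 (size m)).
    by case: (Hex a) => i Hi Ei; apply/hasP; exists i; rewrite ?mem_iota ?Ei //.
  have Hg a : g (k' a) < size m by rewrite -[X in _ < X](size_iota 0) -has_find.
  have Hfg a : f (g (k' a)) = k' a.
    have := nth_find 0 (Hhas a); rewrite nth_iota ?add0n //.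
      by move/eqP.
    by rewrite -[X in _ < X](size_iota 0) -has_find.
  exists [ffun a => Ordinal (Hg a)]; last first.
    by apply/ffunP => a; apply: val_inj; rewrite /F !ffunE /= Hfg.
  rewrite inE; apply/andP; split.
    rewrite (@proper_ext _ _ _ (fun a => nat_of_ord (k' a))) // => a b.
    by rewrite !ffunE /= -Hmono // !Hfg.
  apply/forallP => i.
  have -> : [set a | [ffun a => Ordinal (Hg a)] a == i] =
            [set a | k' a == Ordinal (Hlt _ (ltn_ord i))].
    apply/setP => a; rewrite !inE ffunE; apply/eqP/eqP.
      by move/(congr1 val) => /= Ei; apply: val_inj; rewrite /= -Ei Hfg.
    move/(congr1 val) => /= Ea; apply: val_inj => /=.
    by apply: Hinj => //; rewrite Hfg.
  by rewrite (eqP (Hc _)) /= Hnth.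
Qed.

Lemma chrom_rm0 (V : finType) (G : ecdigraph V) (s t : seq nat) :
  chrom G (s ++ t) = chrom G (s ++ 0 :: t).
Proof.
apply: (@chrom_mono _ _ _ _ (bump (size s))); rewrite ?size_cat /=.
- by move=> i Hi; rewrite /bump; case: (leqP (size s) i) => _; lia.
- by move=> i j _ _; rewrite /bump; case: (leqP (size s) i); case: (leqP (size s) j) => Hj Hi; apply/idP/idP => H; lia.
- move=> i _; rewrite /bump !nth_cat; case: (leqP (size s) i) => H.
    have -> : true + i - size s = (i - size s).+1 by rewrite /=; lia.
    have -> : (true + i < size s) = false by apply/negbTE; rewrite -leqNgt /=; lia.
    by [].
  by rewrite /= H.
- move=> j Hj; rewrite nth_cat; case: (ltngtP j (size s)) => H.
  + by exists j; rewrite ?size_cat /bump; lia.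
  + move=> _; exists j.-1; first by lia.
    by rewrite /bump; case: (leqP (size s) j.-1) => H2 /=; lia.
  + by rewrite H subnn.
Qed.

Lemma chrom_compress_aux (V : finType) (G : ecdigraph V) (m s : seq nat) :
  chrom G (s ++ m) = chrom G (s ++ compress m).
Proof.
elim: m s => [//|x m IH] s; rewrite /compress /=.
case: x => [|x] /=.
  by rewrite -chrom_rm0 IH.
by rewrite -cat_rcons IH cat_rcons.
Qed.

Lemma chrom_compress (V : finType) (G : ecdigraph V) (m : seq nat) :
  chrom G m = chrom G (compress m).
Proof. exact: (chrom_compress_aux G m [::]). Qed.

Lemma card_fibers (V : finType) n (k : V -> 'I_n) :
  \sum_(i < n) #|[set a | k a == i]| = #|V|.
Proof.
rewrite -sum1_card (partition_big k predT) //=.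
by apply: eq_bigr => i _; rewrite -sum1_card; apply: eq_bigl => a; rewrite inE.
Qed.

Lemma chrom_deg (V : finType) (G : ecdigraph V) (m : seq nat) :
  chrom G m <> 0 -> sumn m = #|V|.
Proof.
move/eqP; rewrite -lt0n => /card_gt0P [k]; rewrite inE => /andP [_ /forallP Hc].
rewrite sumnE (big_nth 0) big_mkord -(card_fibers k).
by apply: eq_bigr => i _; rewrite (eqP (Hc i)).
Qed.

Definition okc (e : option etype) (x y : nat) : bool :=
  match e with
  | Some Dashed => x != y
  | Some Solid => x < y
  | Some Double => x <= y
  | None => true
  end.

Lemma proper_at (V : finType) (G : ecdigraph V) (k : V -> nat) a b :
  Defs.proper G k -> okc (edge G a b) (k a) (k b).
Proof. by move/forallP/(_ a)/forallP/(_ b). Qed.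

Lemma proper_intro (V : finType) (G : ecdigraph V) (k : V -> nat) :
  (forall a b, okc (edge G a b) (k a) (k b)) -> Defs.proper G k.
Proof. by move=> H; apply/forallP => a; apply/forallP => b; apply: H. Qed.

Definition colset (V : finType) (G : ecdigraph V) (m : seq nat) :
  {set {ffun V -> 'I_(size m)}} :=
  [set k : {ffun V -> 'I_(size m)} | Defs.proper G (fun a => nat_of_ord (k a)) &&
           [forall i : 'I_(size m), #|[set a | k a == i]| == nth 0 m i]].

Lemma chromE (V : finType) (G : ecdigraph V) (m : seq nat) : chrom G m = #|colset G m|.
Proof. by []. Qed.

Lemma card_sub_set (V : finType) (A : {set V}) (P : pred V) :
  (forall a, P a -> a \in A) ->
  #|[set x : {x : V | x \in A} | P (val x)]| = #|[set a | P a]|.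
Proof.
move=> HP; rewrite -(card_imset _ val_inj); apply: eq_card => a.
rewrite inE; apply/imsetP/idP.
  by case=> x; rewrite inE => Px ->.
by move=> Pa; exists (Sub a (HP a Pa)); rewrite ?inE //.
Qed.

Definition gluev (V : finType) (A : {set V}) (nx : nat)
  (k1 : {x : V | x \in ~: A} -> nat) (k2 : {x : V | x \in A} -> nat) (a : V) : nat :=
  match insub a : option {x : V | x \in A} with
  | Some y => nx + k2 y
  | None => match insub a : option {x : V | x \in ~: A} with
            | Some x => k1 x | None => 0 end
  end.

Lemma gluev_in (V : finType) (A : {set V}) nx k1 k2 (y : {x : V | x \in A}) :
  gluev nx k1 k2 (val y) = nx + k2 y.
Proof. by case: y => a h; rewrite /gluev /= (insubT (fun x => x \in A) h). Qed.

Lemma gluev_out (V : finType) (A : {set V}) nx k1 k2 (x : {x : V | x \in ~: A}) :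
  gluev nx k1 k2 (val x) = k1 x.
Proof.
case: x => a h; have h' : (a \in A) = false by move: h; rewrite inE => /negbTE.
by rewrite /gluev /= insubF // (insubT (fun x => x \in ~: A) h).
Qed.

Lemma gluev_lt (V : finType) (A : {set V}) (mx my : seq nat)
  (k1 : {ffun {x : V | x \in ~: A} -> 'I_(size mx)})
  (k2 : {ffun {x : V | x \in A} -> 'I_(size my)}) (a : V) :
  gluev (size mx) (fun x => nat_of_ord (k1 x)) (fun y => nat_of_ord (k2 y)) a
  < size (mx ++ my).
Proof.
rewrite size_cat; case: (boolP (a \in A)) => h.
  by rewrite (gluev_in _ _ _ (Sub a h : {x : V | x \in A})) ltn_add2l.
have h' : a \in ~: A by rewrite inE.
rewrite (gluev_out _ _ _ (Sub a h' : {x : V | x \in ~: A})).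
exact: leq_trans (ltn_ord _) (leq_addr _ _).
Qed.

Definition glue (V : finType) (A : {set V}) (mx my : seq nat)
  (k1 : {ffun {x : V | x \in ~: A} -> 'I_(size mx)})
  (k2 : {ffun {x : V | x \in A} -> 'I_(size my)}) : {ffun V -> 'I_(size (mx ++ my))} :=
  [ffun a => Ordinal (gluev_lt k1 k2 a)].

Lemma glue_in (V : finType) (A : {set V}) (mx my : seq nat) k1 k2 (y : {x : V | x \in A}) :
  nat_of_ord (@glue V A mx my k1 k2 (val y)) = size mx + k2 y.
Proof. by rewrite /glue ffunE /= gluev_in. Qed.

Lemma glue_out (V : finType) (A : {set V}) (mx my : seq nat) k1 k2 (x : {x : V | x \in ~: A}) :
  nat_of_ord (@glue V A mx my k1 k2 (val x)) = k1 x.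
Proof. by rewrite /glue ffunE /= gluev_out. Qed.

Lemma chrom_split (V : finType) (G : ecdigraph V) (mx my : seq nat) :
  chrom G (mx ++ my) =
  \sum_(A : {set V} | arrow_closed G A)
     chrom (induced G (~: A)) mx * chrom (induced G A) my.
Proof.
rewrite chromE.
pose Aof (k : {ffun V -> 'I_(size (mx ++ my))}) := [set a | size mx <= k a].
have Hac k : k \in colset G (mx ++ my) -> arrow_closed G (Aof k).
  rewrite inE => /andP [Hp _]; apply/forallP => a; apply/forallP => b.
  apply/implyP => /andP []; rewrite !inE => Ha.
  have := proper_at a b Hp; rewrite /okc.
  case: (edge G a b) => [[]|] //= H _; [exact: leq_trans Ha (ltnW H) | exact: leq_trans Ha H].
rewrite -sum1_card (partition_big Aof (arrow_closed G)) //=.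
apply: eq_bigr => A HA.
rewrite !chromE -cardsX.
transitivity #|[set k in colset G (mx ++ my) | Aof k == A]|.
  by rewrite -sum1_card; apply: eq_bigl => k; rewrite inE.
pose gl := fun p : {ffun {x : V | x \in ~: A} -> 'I_(size mx)} *
                   {ffun {x : V | x \in A} -> 'I_(size my)} => glue p.1 p.2.
have glinj : injective gl.
  case=> k1 k2 [k1' k2']; rewrite /gl /= => E; congr pair; apply/ffunP => x; apply: val_inj.
    have := congr1 (fun g : {ffun V -> _} => nat_of_ord (g (val x))) E.
    by rewrite /= !glue_out.
  have := congr1 (fun g : {ffun V -> _} => nat_of_ord (g (val x))) E.
  by rewrite /= !glue_in => /eqP; rewrite eqn_add2l => /eqP.
rewrite -(card_imset _ glinj); apply: eq_card => k; rewrite inE; apply/idP/imsetP.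
- move=> /andP [HS /eqP HAk].
  move: (HS); rewrite inE => /andP [Hp /forallP Hc].
  have inAof a : a \in A -> size mx <= k a by rewrite -HAk inE.
  have h1 : forall x : {x : V | x \in ~: A}, k (val x) < size mx.
    by case=> a /=; rewrite inE -HAk inE -ltnNge.
  have h2 : forall y : {x : V | x \in A}, k (val y) - size mx < size my.
    case=> a /=; rewrite -HAk inE => H; have := ltn_ord (k a); have := size_cat mx my; idtac.
    move=> E L; have L2 : nat_of_ord (k a) < size mx + size my by rewrite -E.
    by rewrite ltn_subLR.
  exists ([ffun x => Ordinal (h1 x)], [ffun y => Ordinal (h2 y)]); last first.
    apply/ffunP => a; apply: val_inj; rewrite /gl /=; case: (boolP (a \in A)) => h.
      rewrite (glue_in _ _ (Sub a h : {x : V | x \in A})) ffunE /= subnKC //.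
      have : a \in Aof k by rewrite HAk.
      by rewrite inE.
    have h' : a \in ~: A by rewrite inE.
    by rewrite (glue_out _ _ (Sub a h' : {x : V | x \in ~: A})) ffunE.
  rewrite inE; apply/andP; split; rewrite inE; apply/andP; split.
  + by apply: proper_intro => x y; rewrite !ffunE /=; exact: proper_at (val x) (val y) Hp.
  + apply/forallP => i.
    rewrite (_ : [set x | _ ] = [set x : {x : V | x \in ~: A} |
                   nat_of_ord (k (val x)) == nat_of_ord i]); last first.
      by apply/setP => x; rewrite !inE ffunE.
    rewrite (@card_sub_set _ _ (fun a => nat_of_ord (k a) == nat_of_ord i)); last first.
      by move=> a /eqP Ea; rewrite inE -HAk inE -ltnNge Ea.
    have hj : nat_of_ord i < size (mx ++ my).
      by rewrite size_cat; exact: leq_trans (ltn_ord i) (leq_addr _ _).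
    have := Hc (Ordinal hj); rewrite nth_cat /= ltn_ord.
    congr (#|_| == _); apply/setP => a; rewrite !inE; by [].
  + apply: proper_intro => x y; rewrite !ffunE /=.
    have hx := inAof _ (valP x); have hy := inAof _ (valP y).
    have := proper_at (val x) (val y) Hp; rewrite /okc /=.
    case: (edge G (val x) (val y)) => [[]|] //=.
    * by rewrite eqn_sub2rE.
    * by rewrite ltn_sub2rE.
    * by rewrite leq_sub2rE.
  + apply/forallP => i.
    rewrite (_ : [set x | _ ] = [set x : {x : V | x \in A} |
                   nat_of_ord (k (val x)) == size mx + i]); last first.
      apply/setP => x; rewrite !inE ffunE /=.
      have H := inAof _ (valP x).
      apply/eqP/eqP => /= E.
        by rewrite -E /= subnKC.
      by apply: val_inj; rewrite /= E addKn.
    rewrite (@card_sub_set _ _ (fun a => nat_of_ord (k a) == size mx + i)); last first.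
      by move=> a /eqP Ea; rewrite -HAk inE Ea leq_addr.
    have hj : size mx + i < size (mx ++ my) by rewrite size_cat ltn_add2l.
    have := Hc (Ordinal hj); rewrite nth_cat /= ltnNge leq_addr /= addKn.
    congr (#|_| == _); apply/setP => a; rewrite !inE; by [].
- case=> [[k1 k2]]; rewrite inE /= => /andP [H1 H2] ->.
  move: H1 H2; rewrite !inE => /andP [Hp1 /forallP Hc1] /andP [Hp2 /forallP Hc2].
  have Gin (y : {x : V | x \in A}) : nat_of_ord (gl (k1, k2) (val y)) = size mx + k2 y.
    exact: glue_in.
  have Gout (x : {x : V | x \in ~: A}) : nat_of_ord (gl (k1, k2) (val x)) = k1 x.
    exact: glue_out.
  have Hout a : a \notin A -> a \in ~: A by rewrite inE.
  apply/andP; split; last first.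
    apply/eqP/setP => a; rewrite inE; case: (boolP (a \in A)) => h.
      by rewrite (Gin (Sub a h)) leq_addr.
    by rewrite (Gout (Sub a (Hout a h))); apply/negbTE; rewrite -ltnNge.
  apply/andP; split.
    apply: proper_intro => a b.
    case: (boolP (a \in A)) => ha; case: (boolP (b \in A)) => hb.
    + rewrite (Gin (Sub a ha)) (Gin (Sub b hb)).
      have := proper_at (Sub a ha) (Sub b hb) Hp2; rewrite /okc /=.
      by case: (edge G a b) => [[]|] //=; rewrite ?eqn_add2l ?ltn_add2l ?leq_add2l.
    + rewrite (Gin (Sub a ha)) (Gout (Sub b (Hout b hb))).
      have := ltn_ord (k1 (Sub b (Hout b hb))).
      move/forallP/(_ a)/forallP/(_ b)/implyP: HA; rewrite ha /okc.
      case: (edge G a b) => [[]|] //=.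
      * by move=> _ H; rewrite neq_ltn (leq_trans H (leq_addr _ _)) orbT.
      * by move=> /(_ isT); rewrite (negbTE hb).
      * by move=> /(_ isT); rewrite (negbTE hb).
    + rewrite (Gout (Sub a (Hout a ha))) (Gin (Sub b hb)) /okc.
      have := ltn_ord (k1 (Sub a (Hout a ha))) => H.
      have H' := leq_trans H (leq_addr (k2 (Sub b hb)) _).
      case: (edge G a b) => [[]|] //=.
      * by rewrite neq_ltn H'.
      * exact: ltnW.
    + rewrite (Gout (Sub a (Hout a ha))) (Gout (Sub b (Hout b hb))).
      exact: proper_at (Sub a (Hout a ha)) (Sub b (Hout b hb)) Hp1.
  apply/forallP => j.
  rewrite (_ : [set a | gl (k1, k2) a == j] =
               [set a | nat_of_ord (gl (k1, k2) a) == nat_of_ord j]); last first.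
    by apply/setP => a; rewrite !inE.
  rewrite nth_cat; case: (ltnP j (size mx)) => hj.
    rewrite -(@card_sub_set _ (~: A) (fun a => nat_of_ord (gl (k1, k2) a) == j)); last first.
      move=> a /eqP Ea; rewrite inE; apply/negP => ha; move: hj.
      by rewrite -Ea (Gin (Sub a ha)) ltnNge leq_addr.
    rewrite (_ : [set x : {x : V | x \in ~: A} | _] = [set x | k1 x == Ordinal hj]).
      exact: Hc1.
    by apply/setP => x; rewrite !inE (Gout x).
  have hj2 : j - size mx < size my.
    by rewrite ltn_subLR // -size_cat; exact: ltn_ord j.
  rewrite -(@card_sub_set _ A (fun a => nat_of_ord (gl (k1, k2) a) == j)); last first.
    move=> a /eqP Ea; apply/negPn/negP => ha; move: hj.
    by rewrite -Ea (Gout (Sub a (Hout a ha))) leqNgt ltn_ord.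
  rewrite (_ : [set x : {x : V | x \in A} | _] = [set x | k2 x == Ordinal hj2]).
    exact: Hc2.
  apply/setP => y; rewrite !inE (Gin y); apply/eqP/eqP => E.
    by apply: val_inj; rewrite /= -E addKn.
  by rewrite E /= subnKC.
Qed.

Theorem mainTheorem2 (V : finType) (G : ecdigraph V) :
  is_qsym (chrom G) /\
  forall mx my : seq nat,
    Delta (chrom G) mx my =
    \sum_(A : {set V} | arrow_closed G A)
       chrom (induced G (~: A)) mx * chrom (induced G A) my.
Proof.
split.
  split.
    by exists #|V| => m H; rewrite (chrom_deg H).
  by move=> m1 m2 E; rewrite chrom_compress E -chrom_compress.
by move=> mx my; rewrite /Delta -chrom_compress chrom_split.
Qed.
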